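(* Let $\mathcal{C}$ be a peircean bicategory. For every arrow $c:X\to Y$, $(\neg c)^\dagger=\neg(c^\dagger)$.
   Context: Composition in diagrammatic order. A cartesian bicategory is a poset-enriched symmetric monoidal category with, for each $X$, commutative comonoid $(\mathrm{copy}_X,\mathrm{disc}_X)$ and monoid $(\mathrm{cocopy}_X,\mathrm{codisc}_X)$ forming special Frobenius bimonoids, comonoid left adjoint to monoid, every arrow $c$ satisfying $c;\mathrm{copy}\le\mathrm{copy};(c\otimes c)$ and $c;\mathrm{disc}\le\mathrm{disc}$, with standard coherence. A map is an arrow $f$ with $f;\mathrm{copy}=\mathrm{copy};(f\otimes f)$ and $f;\mathrm{disc}=\mathrm{disc}$. A peircean bicategory is a cartesian bicategory whose homsets carry Boolean algebras (with the given order) such that $f;\neg c=\neg(f;c)$ for every map $f:X\to Y$ and arrow $c:Y\to Z$. The converse of $c:X\to Y$ is $c^\dagger=(\mathrm{id}_Y\otimes(\mathrm{codisc}_X;\mathrm{copy}_X));(\mathrm{id}_Y\otimes c\otimes\mathrm{id}_X);((\mathrm{cocopy}_Y;\mathrm{disc}_Y)\otimes\mathrm{id}_X):Y\to X$. *)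

(* Defs.v *)
(* Plain Rocq (no library needed). Peircean bicategories, following the paper:
   composition is written in DIAGRAMMATIC order: comp f g = f ; g. *)

Record Sig := {
  ob : Type;
  hom : ob -> ob -> Type;
  le : forall X Y : ob, hom X Y -> hom X Y -> Prop;
  idm : forall X : ob, hom X X;
  comp : forall X Y Z : ob, hom X Y -> hom Y Z -> hom X Z;
  tob : ob -> ob -> ob;
  unit : ob;
  tens : forall X Y X' Y' : ob, hom X Y -> hom X' Y' -> hom (tob X X') (tob Y Y');
  assoc : forall X Y Z : ob, hom (tob (tob X Y) Z) (tob X (tob Y Z));
  assoc_i : forall X Y Z : ob, hom (tob X (tob Y Z)) (tob (tob X Y) Z);
  lu : forall X : ob, hom (tob unit X) X;
  lu_i : forall X : ob, hom X (tob unit X);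
  ru : forall X : ob, hom (tob X unit) X;
  ru_i : forall X : ob, hom X (tob X unit);
  sym : forall X Y : ob, hom (tob X Y) (tob Y X);
  copy : forall X : ob, hom X (tob X X);
  disc : forall X : ob, hom X unit;
  cocopy : forall X : ob, hom (tob X X) X;
  codisc : forall X : ob, hom unit X;
  bmeet : forall X Y : ob, hom X Y -> hom X Y -> hom X Y;
  bjoin : forall X Y : ob, hom X Y -> hom X Y -> hom X Y;
  btop : forall X Y : ob, hom X Y;
  bbot : forall X Y : ob, hom X Y;
  bneg : forall X Y : ob, hom X Y -> hom X Y
}.

Arguments hom {s} _ _.
Arguments le {s X Y} _ _.
Arguments idm {s} X.
Arguments comp {s X Y Z} _ _.
Arguments tob {s} _ _.
Arguments unit {s}.
Arguments tens {s X Y X' Y'} _ _.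
Arguments assoc {s} X Y Z.
Arguments assoc_i {s} X Y Z.
Arguments lu {s} X.
Arguments lu_i {s} X.
Arguments ru {s} X.
Arguments ru_i {s} X.
Arguments sym {s} X Y.
Arguments copy {s} X.
Arguments disc {s} X.
Arguments cocopy {s} X.
Arguments codisc {s} X.
Arguments bmeet {s X Y} _ _.
Arguments bjoin {s X Y} _ _.
Arguments btop {s} X Y.
Arguments bbot {s} X Y.
Arguments bneg {s X Y} _.

Declare Scope cb_scope.
Delimit Scope cb_scope with cb.
Notation "f ;; g" := (comp f g) (at level 40, left associativity) : cb_scope.
Notation "f ⊗ g" := (tens f g) (at level 34, left associativity) : cb_scope.
Notation "f ≤ g" := (le f g) (at level 70, no associativity) : cb_scope.
Open Scope cb_scope.

Definition mid {S : Sig} (X Y : ob S) : hom (tob (tob X X) (tob Y Y)) (tob (tob X Y) (tob X Y)) :=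
  assoc X X (tob Y Y) ;;
  (idm X ⊗ (assoc_i X Y Y ;; (sym X Y ⊗ idm Y) ;; assoc Y X Y)) ;;
  assoc_i X Y (tob X Y).

Definition mid_i {S : Sig} (X Y : ob S) : hom (tob (tob X Y) (tob X Y)) (tob (tob X X) (tob Y Y)) :=
  assoc X Y (tob X Y) ;;
  (idm X ⊗ (assoc_i Y X Y ;; (sym Y X ⊗ idm Y) ;; assoc X Y Y)) ;;
  assoc_i X X (tob Y Y).

Record SMPosLaws (S : Sig) : Prop := {
  le_refl : forall (X Y : ob S) (f : hom X Y), f ≤ f;
  le_trans : forall (X Y : ob S) (f g h : hom X Y), f ≤ g -> g ≤ h -> f ≤ h;
  le_antisym : forall (X Y : ob S) (f g : hom X Y), f ≤ g -> g ≤ f -> f = g;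
  comp_mono : forall (X Y Z : ob S) (f f' : hom X Y) (g g' : hom Y Z),
      f ≤ f' -> g ≤ g' -> f ;; g ≤ f' ;; g';
  tens_mono : forall (X Y X' Y' : ob S) (f f' : hom X Y) (g g' : hom X' Y'),
      f ≤ f' -> g ≤ g' -> f ⊗ g ≤ f' ⊗ g';
  comp_id_l : forall (X Y : ob S) (f : hom X Y), idm X ;; f = f;
  comp_id_r : forall (X Y : ob S) (f : hom X Y), f ;; idm Y = f;
  comp_assoc : forall (X Y Z W : ob S) (f : hom X Y) (g : hom Y Z) (h : hom Z W),
      (f ;; g) ;; h = f ;; (g ;; h);
  tens_id : forall X Y : ob S, idm X ⊗ idm Y = idm (tob X Y);
  tens_comp : forall (X Y Z X' Y' Z' : ob S) (f : hom X Y) (g : hom Y Z)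
      (f' : hom X' Y') (g' : hom Y' Z'), (f ;; g) ⊗ (f' ;; g') = (f ⊗ f') ;; (g ⊗ g');
  assoc_iso1 : forall X Y Z : ob S, assoc X Y Z ;; assoc_i X Y Z = idm _;
  assoc_iso2 : forall X Y Z : ob S, assoc_i X Y Z ;; assoc X Y Z = idm _;
  lu_iso1 : forall X : ob S, lu X ;; lu_i X = idm _;
  lu_iso2 : forall X : ob S, lu_i X ;; lu X = idm _;
  ru_iso1 : forall X : ob S, ru X ;; ru_i X = idm _;
  ru_iso2 : forall X : ob S, ru_i X ;; ru X = idm _;
  sym_inv : forall X Y : ob S, sym X Y ;; sym Y X = idm _;
  assoc_nat : forall (X X' Y Y' Z Z' : ob S) (f : hom X X') (g : hom Y Y') (h : hom Z Z'),
      ((f ⊗ g) ⊗ h) ;; assoc X' Y' Z' = assoc X Y Z ;; (f ⊗ (g ⊗ h));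
  lu_nat : forall (X Y : ob S) (f : hom X Y), (idm unit ⊗ f) ;; lu Y = lu X ;; f;
  ru_nat : forall (X Y : ob S) (f : hom X Y), (f ⊗ idm unit) ;; ru Y = ru X ;; f;
  sym_nat : forall (X X' Y Y' : ob S) (f : hom X X') (g : hom Y Y'),
      (f ⊗ g) ;; sym X' Y' = sym X Y ;; (g ⊗ f);
  pentagon : forall W X Y Z : ob S,
      (assoc W X Y ⊗ idm Z) ;; assoc W (tob X Y) Z ;; (idm W ⊗ assoc X Y Z)
      = assoc (tob W X) Y Z ;; assoc W X (tob Y Z);
  triangle : forall X Y : ob S,
      assoc X unit Y ;; (idm X ⊗ lu Y) = ru X ⊗ idm Y;
  hexagon : forall X Y Z : ob S,
      assoc X Y Z ;; sym X (tob Y Z) ;; assoc Y Z X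
      = (sym X Y ⊗ idm Z) ;; assoc Y X Z ;; (idm Y ⊗ sym X Z)
}.

Record CartLaws (S : Sig) : Prop := {
  copy_assoc : forall X : ob S,
      copy X ;; (copy X ⊗ idm X) ;; assoc X X X = copy X ;; (idm X ⊗ copy X);
  copy_unit_l : forall X : ob S, copy X ;; (disc X ⊗ idm X) ;; lu X = idm X;
  copy_unit_r : forall X : ob S, copy X ;; (idm X ⊗ disc X) ;; ru X = idm X;
  copy_comm : forall X : ob S, copy X ;; sym X X = copy X;
  cocopy_assoc : forall X : ob S,
      assoc X X X ;; (idm X ⊗ cocopy X) ;; cocopy X = (cocopy X ⊗ idm X) ;; cocopy X;
  cocopy_unit_l : forall X : ob S, lu_i X ;; (codisc X ⊗ idm X) ;; cocopy X = idm X;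
  cocopy_unit_r : forall X : ob S, ru_i X ;; (idm X ⊗ codisc X) ;; cocopy X = idm X;
  cocopy_comm : forall X : ob S, sym X X ;; cocopy X = cocopy X;
  frob_l : forall X : ob S,
      (copy X ⊗ idm X) ;; assoc X X X ;; (idm X ⊗ cocopy X) = cocopy X ;; copy X;
  frob_r : forall X : ob S,
      (idm X ⊗ copy X) ;; assoc_i X X X ;; (cocopy X ⊗ idm X) = cocopy X ;; copy X;
  special : forall X : ob S, copy X ;; cocopy X = idm X;
  adj_copy_unit : forall X : ob S, idm X ≤ copy X ;; cocopy X;
  adj_copy_counit : forall X : ob S, cocopy X ;; copy X ≤ idm (tob X X);
  adj_disc_unit : forall X : ob S, idm X ≤ disc X ;; codisc X;
  adj_disc_counit : forall X : ob S, codisc X ;; disc X ≤ idm unit;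
  lax_copy : forall (X Y : ob S) (c : hom X Y), c ;; copy Y ≤ copy X ;; (c ⊗ c);
  lax_disc : forall (X Y : ob S) (c : hom X Y), c ;; disc Y ≤ disc X;
  copy_tens : forall X Y : ob S, copy (tob X Y) = (copy X ⊗ copy Y) ;; mid X Y;
  disc_tens : forall X Y : ob S, disc (tob X Y) = (disc X ⊗ disc Y) ;; lu unit;
  copy_unit : copy (@unit S) = lu_i unit;
  disc_unit : disc (@unit S) = idm unit;
  cocopy_tens : forall X Y : ob S, cocopy (tob X Y) = mid_i X Y ;; (cocopy X ⊗ cocopy Y);
  codisc_tens : forall X Y : ob S, codisc (tob X Y) = lu_i unit ;; (codisc X ⊗ codisc Y);
  cocopy_unit : cocopy (@unit S) = lu unit;
  codisc_unit : codisc (@unit S) = idm unit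
}.

Record BoolLaws (S : Sig) : Prop := {
  meet_glb : forall (X Y : ob S) (a b h : hom X Y), h ≤ bmeet a b <-> (h ≤ a /\ h ≤ b);
  join_lub : forall (X Y : ob S) (a b h : hom X Y), bjoin a b ≤ h <-> (a ≤ h /\ b ≤ h);
  top_max : forall (X Y : ob S) (a : hom X Y), a ≤ btop X Y;
  bot_min : forall (X Y : ob S) (a : hom X Y), bbot X Y ≤ a;
  distrib : forall (X Y : ob S) (a b c : hom X Y),
      bmeet a (bjoin b c) = bjoin (bmeet a b) (bmeet a c);
  neg_meet : forall (X Y : ob S) (a : hom X Y), bmeet a (bneg a) = bbot X Y;
  neg_join : forall (X Y : ob S) (a : hom X Y), bjoin a (bneg a) = btop X Y
}.

Definition is_map {S : Sig} {X Y : ob S} (f : hom X Y) : Prop :=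
  f ;; copy Y = copy X ;; (f ⊗ f) /\ f ;; disc Y = disc X.

Record CartesianBicategory := {
  cb_sig :> Sig;
  cb_smc : SMPosLaws cb_sig;
  cb_cart : CartLaws cb_sig
}.

Record PeirceanBicategory := {
  pb_cb :> CartesianBicategory;
  pb_bool : BoolLaws pb_cb;
  pb_peirce : forall (X Y Z : ob pb_cb) (f : hom X Y) (c : hom Y Z),
      is_map f -> f ;; bneg c = bneg (f ;; c)
}.

(* converse of c : X -> Y, as in the paper, with the (implicit) structural
   isomorphisms made explicit:
   Y -> Y⊗I -> Y⊗(X⊗X) -> (Y⊗X)⊗X -> (Y⊗Y)⊗X -> I⊗X -> X *)
Definition conv {S : Sig} {X Y : ob S} (c : hom X Y) : hom Y X :=
  ru_i Y ;; (idm Y ⊗ (codisc X ;; copy X)) ;; assoc_i Y X X ;;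
  ((idm Y ⊗ c) ⊗ idm X) ;; ((cocopy Y ;; disc Y) ⊗ idm X) ;; lu X.

(* Main.v *)
Require Import Defs.
From Corelib Require Import ssreflect.

Section Coh.
Variable C : CartesianBicategory.
Notation L := (cb_smc C).
Notation K := (cb_cart C).
Notation I := (@unit C).

Lemma cA {X Y Z W : ob C} (f : hom X Y) (g : hom Y Z) (h : hom Z W) :
  f ;; g ;; h = f ;; (g ;; h).
Proof. exact (comp_assoc _ L _ _ _ _ f g h). Qed.
Lemma il {X Y : ob C} (f : hom X Y) : idm X ;; f = f.
Proof. exact (comp_id_l _ L _ _ f). Qed.
Lemma ir {X Y : ob C} (f : hom X Y) : f ;; idm Y = f.
Proof. exact (comp_id_r _ L _ _ f). Qed.
Lemma tid (X Y : ob C) : idm X ⊗ idm Y = idm (tob X Y).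
Proof. exact (tens_id _ L X Y). Qed.
Lemma tc {X Y Z X' Y' Z' : ob C} (f : hom X Y) (g : hom Y Z) (f' : hom X' Y') (g' : hom Y' Z') :
  (f ;; g) ⊗ (f' ;; g') = (f ⊗ f') ;; (g ⊗ g').
Proof. exact (tens_comp _ L _ _ _ _ _ _ f g f' g'). Qed.
Lemma tcl {X Y Z W : ob C} (f : hom X Y) (g : hom Y Z) :
  (f ;; g) ⊗ idm W = (f ⊗ idm W) ;; (g ⊗ idm W).
Proof. by rewrite -tc il. Qed.
Lemma tcr {X Y Z W : ob C} (f : hom X Y) (g : hom Y Z) :
  idm W ⊗ (f ;; g) = (idm W ⊗ f) ;; (idm W ⊗ g).
Proof. by rewrite -tc il. Qed.
Lemma xch1 {X Y X' Y' : ob C} (f : hom X Y) (g : hom X' Y') :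
  (f ⊗ idm X') ;; (idm Y ⊗ g) = f ⊗ g.
Proof. by rewrite -tc il ir. Qed.
Lemma xch2 {X Y X' Y' : ob C} (f : hom X Y) (g : hom X' Y') :
  (idm X ⊗ g) ;; (f ⊗ idm Y') = f ⊗ g.
Proof. by rewrite -tc il ir. Qed.
Lemma anat {X X' Y Y' Z Z' : ob C} (f : hom X X') (g : hom Y Y') (h : hom Z Z') :
  ((f ⊗ g) ⊗ h) ;; assoc X' Y' Z' = assoc X Y Z ;; (f ⊗ (g ⊗ h)).
Proof. exact (assoc_nat _ L _ _ _ _ _ _ f g h). Qed.
Lemma a1 (X Y Z : ob C) : assoc X Y Z ;; assoc_i X Y Z = idm _.
Proof. exact (assoc_iso1 _ L X Y Z). Qed.
Lemma a2 (X Y Z : ob C) : assoc_i X Y Z ;; assoc X Y Z = idm _.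
Proof. exact (assoc_iso2 _ L X Y Z). Qed.
Lemma l1 (X : ob C) : lu X ;; lu_i X = idm _.
Proof. exact (lu_iso1 _ L X). Qed.
Lemma l2 (X : ob C) : lu_i X ;; lu X = idm _.
Proof. exact (lu_iso2 _ L X). Qed.
Lemma r1 (X : ob C) : ru X ;; ru_i X = idm _.
Proof. exact (ru_iso1 _ L X). Qed.
Lemma r2 (X : ob C) : ru_i X ;; ru X = idm _.
Proof. exact (ru_iso2 _ L X). Qed.
Lemma ainat {X X' Y Y' Z Z' : ob C} (f : hom X X') (g : hom Y Y') (h : hom Z Z') :
  (f ⊗ (g ⊗ h)) ;; assoc_i X' Y' Z' = assoc_i X Y Z ;; ((f ⊗ g) ⊗ h).
Proof.
  rewrite -[RHS]ir -(a1 X' Y' Z') -cA (cA (assoc_i X Y Z)) anat -(cA (assoc_i X Y Z)).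
  by rewrite a2 il.
Qed.
Lemma lnat {X Y : ob C} (f : hom X Y) : (idm I ⊗ f) ;; lu Y = lu X ;; f.
Proof. exact (lu_nat _ L _ _ f). Qed.
Lemma rnat {X Y : ob C} (f : hom X Y) : (f ⊗ idm I) ;; ru Y = ru X ;; f.
Proof. exact (ru_nat _ L _ _ f). Qed.
Lemma lnat_i {X Y : ob C} (f : hom X Y) : lu_i X ;; (idm I ⊗ f) = f ;; lu_i Y.
Proof. by rewrite -[_ ;; (idm I ⊗ f)]ir -(l1 Y) -!cA (cA _ _ (lu Y)) lnat -cA l2 il. Qed.
Lemma rnat_i {X Y : ob C} (f : hom X Y) : ru_i X ;; (f ⊗ idm I) = f ;; ru_i Y.
Proof. by rewrite -[_ ;; (f ⊗ idm I)]ir -(r1 Y) -!cA (cA _ _ (ru Y)) rnat -cA r2 il. Qed.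
Lemma lfaith {X Y : ob C} (f g : hom X Y) : idm I ⊗ f = idm I ⊗ g -> f = g.
Proof.
  move=> H. rewrite -(il f) -(il g) -(l2 X) !cA -!lnat H. done.
Qed.
Lemma rfaith {X Y : ob C} (f g : hom X Y) : f ⊗ idm I = g ⊗ idm I -> f = g.
Proof.
  move=> H. rewrite -(il f) -(il g) -(r2 X) !cA -!rnat H. done.
Qed.
Lemma tri (X Y : ob C) : assoc X I Y ;; (idm X ⊗ lu Y) = ru X ⊗ idm Y.
Proof. exact (triangle _ L X Y). Qed.
Lemma pent (W X Y Z : ob C) :
  (assoc W X Y ⊗ idm Z) ;; assoc W (tob X Y) Z ;; (idm W ⊗ assoc X Y Z)
  = assoc (tob W X) Y Z ;; assoc W X (tob Y Z).
Proof. exact (pentagon _ L W X Y Z). Qed.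

Lemma canc_l {A B D : ob C} (p : hom A B) (q : hom B A) (x y : hom B D) :
  q ;; p = idm B -> p ;; x = p ;; y -> x = y.
Proof. move=> H E. by rewrite -(il x) -(il y) -H !cA E. Qed.
Lemma canc_r {A B D : ob C} (p : hom B D) (q : hom D B) (x y : hom A B) :
  p ;; q = idm B -> x ;; p = y ;; p -> x = y.
Proof. move=> H E. by rewrite -(ir x) -(ir y) -H -!cA E. Qed.

Lemma cohA (X Y : ob C) : assoc I X Y ;; lu (tob X Y) = lu X ⊗ idm Y.
Proof.
  apply: lfaith.
  apply: (canc_l ((assoc I I X ⊗ idm Y) ;; assoc I (tob I X) Y)
                 (assoc_i I (tob I X) Y ;; (assoc_i I I X ⊗ idm Y))).
  - by rewrite cA -(cA (assoc_i I I X ⊗ idm Y)) -tcl a2 tid il a2.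
  - rewrite tcr -cA pent (cA (assoc (tob I I) X Y)) tri -tid -anat -tri tcl !cA anat. done.
Qed.

Lemma cohB (X Y : ob C) : assoc X Y I ;; (idm X ⊗ ru Y) = ru (tob X Y).
Proof.
  apply: rfaith.
  apply: (canc_r (assoc X Y I) (assoc_i X Y I)); first exact: a1.
  rewrite -tri -tid cA anat -cA -pent tcl !cA.
  by rewrite -tcr tri -anat.
Qed.

Lemma luI : lu I = ru I.
Proof.
  apply: rfaith.
  have H : lu (tob I I) = idm I ⊗ lu I.
  { apply: (canc_r (lu I) (lu_i I)); first exact: l1. by rewrite lnat. }
  by rewrite -cohA -tri H.
Qed.

Lemma frr' (X W : ob C) (k : hom (tob X X) W) :
  idm X ⊗ copy X ;; (assoc_i X X X ;; (cocopy X ⊗ idm X ;; k)) = cocopy X ;; (copy X ;; k).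
Proof. by rewrite -!cA (frob_r _ K X). Qed.
Lemma frl' (X W : ob C) (k : hom (tob X X) W) :
  copy X ⊗ idm X ;; (assoc X X X ;; (idm X ⊗ cocopy X ;; k)) = cocopy X ;; (copy X ;; k).
Proof. by rewrite -!cA (frob_l _ K X). Qed.
Lemma cur' (X W : ob C) (k : hom X W) :
  ru_i X ;; (idm X ⊗ codisc X ;; (cocopy X ;; k)) = k.
Proof. by rewrite -!cA (cocopy_unit_r _ K X) il. Qed.
Lemma cul' (X W : ob C) (k : hom X W) :
  lu_i X ;; (codisc X ⊗ idm X ;; (cocopy X ;; k)) = k.
Proof. by rewrite -!cA (cocopy_unit_l _ K X) il. Qed.
Lemma cpl' (X W : ob C) (k : hom X W) :
  copy X ;; (disc X ⊗ idm X ;; (lu X ;; k)) = k.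
Proof. by rewrite -!cA (copy_unit_l _ K X) il. Qed.
Lemma cpr' (X W : ob C) (k : hom X W) :
  copy X ;; (idm X ⊗ disc X ;; (ru X ;; k)) = k.
Proof. by rewrite -!cA (copy_unit_r _ K X) il. Qed.

Lemma snake1 (X W : ob C) (k : hom X W) :
  ru_i X ;; (idm X ⊗ (codisc X ;; copy X) ;; (assoc_i X X X ;;
    ((cocopy X ;; disc X) ⊗ idm X ;; (lu X ;; k)))) = k.
Proof. by rewrite tcr tcl !cA frr' cur' cpl'. Qed.

Lemma snake2 (X : ob C) :
  lu_i X ;; ((codisc X ;; copy X) ⊗ idm X) ;; assoc X X X ;;
    (idm X ⊗ (cocopy X ;; disc X)) ;; ru X = idm X.
Proof. by rewrite tcr tcl -(ir (ru X)) !cA frl' cul' cpr'. Qed.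

Definition T {X Y : ob C} (n : hom I (tob Y X)) : hom Y X :=
  ru_i Y ;; (idm Y ⊗ n) ;; assoc_i Y Y X ;; ((cocopy Y ;; disc Y) ⊗ idm X) ;; lu X.

Lemma TU {X Y : ob C} (d : hom Y X) : T (codisc Y ;; copy Y ;; (idm Y ⊗ d)) = d.
Proof.
  rewrite /T tcr !cA -(cA (idm Y ⊗ (idm Y ⊗ d))) ainat cA tid.
  rewrite -(cA (idm (tob Y Y) ⊗ d)) xch2 -(xch1 (cocopy Y ;; disc Y) d) !cA lnat.
  exact: snake1.
Qed.

Lemma Bi (X Y : ob C) : idm X ⊗ ru_i Y = ru_i (tob X Y) ;; assoc X Y I.
Proof.
  by rewrite -[LHS]il -(r2 (tob X Y)) -cohB !cA -tcr r1 tid ir.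
Qed.
Lemma Ai (X Y : ob C) : lu_i (tob X Y) = (lu_i X ⊗ idm Y) ;; assoc I X Y.
Proof.
  by rewrite -[LHS]il -(tid X Y) -(l2 X) tcl -cohA !cA l1 ir.
Qed.
Lemma riI : ru_i I = lu_i I.
Proof. by rewrite -[LHS]ir -(l1 I) luI -cA r2 il. Qed.
Lemma rnat_i' {X Y W : ob C} (f : hom X Y) (k : hom (tob Y I) W) :
  f ;; (ru_i Y ;; k) = ru_i X ;; ((f ⊗ idm I) ;; k).
Proof. by rewrite -!cA rnat_i. Qed.
Lemma lnat_i' {X Y W : ob C} (f : hom X Y) (k : hom (tob I Y) W) :
  lu_i X ;; ((idm I ⊗ f) ;; k) = f ;; (lu_i Y ;; k).
Proof. by rewrite -!cA lnat_i. Qed.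
Lemma xchg' {A A' B B' W : ob C} (f : hom A A') (g : hom B B') (k : hom (tob A' B') W) :
  (f ⊗ idm B) ;; ((idm A' ⊗ g) ;; k) = (idm A ⊗ g) ;; ((f ⊗ idm B') ;; k).
Proof. by rewrite -!cA xch1 xch2. Qed.
Lemma anat' {X X' Y Y' Z Z' W : ob C} (f : hom X X') (g : hom Y Y') (h : hom Z Z')
  (k : hom (tob X' (tob Y' Z')) W) :
  assoc X Y Z ;; ((f ⊗ (g ⊗ h)) ;; k) = ((f ⊗ g) ⊗ h) ;; (assoc X' Y' Z' ;; k).
Proof. by rewrite -!cA anat. Qed.
Lemma pent' (W X Y Z V : ob C) (k : hom (tob W (tob (tob X Y) Z)) V) :
  assoc (tob W X) Y Z ;; (assoc W X (tob Y Z) ;; ((idm W ⊗ assoc_i X Y Z) ;; k))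
  = (assoc W X Y ⊗ idm Z) ;; (assoc W (tob X Y) Z ;; k).
Proof.
  rewrite -!cA -pent !cA -(cA (idm W ⊗ assoc X Y Z)) -tcr a1 tid il. done.
Qed.

Lemma UT {X Y : ob C} (n : hom I (tob Y X)) : codisc Y ;; copy Y ;; (idm Y ⊗ T n) = n.
Proof.
  rewrite /T !tcr Bi !cA !rnat_i' -(cA (assoc Y Y I)) -anat cA tid !xchg' riI lnat_i'.
  rewrite -[RHS]ir. congr (n ;; _).
  rewrite Ai cA -tid !anat' pent' anat'.
  rewrite tri -!tcl -!cA (cA (lu_i Y)) -tcl snake2 tid. done.
Qed.

Lemma convT {X Y : ob C} (c : hom X Y) : conv c = T (codisc X ;; copy X ;; (c ⊗ idm X)).
Proof.
  rewrite /conv /T !tcr !cA -(cA (idm Y ⊗ (c ⊗ idm X))) ainat !cA. done.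
Qed.

Lemma snat {X X' Y Y' : ob C} (f : hom X X') (g : hom Y Y') :
  (f ⊗ g) ;; sym X' Y' = sym X Y ;; (g ⊗ f).
Proof. exact (sym_nat _ L _ _ _ _ f g). Qed.

Lemma conv_inv {X Y : ob C} (c : hom X Y) : conv (conv c) = c.
Proof.
  rewrite (convT (conv c)).
  have H : codisc Y ;; copy Y ;; (conv c ⊗ idm Y) = codisc X ;; copy X ;; (idm X ⊗ c).
  { rewrite -{1}(copy_comm _ K Y) -cA cA -snat -cA (convT c) UT.
    by rewrite cA snat -(cA (codisc X ;; copy X)) (cA (codisc X)) (copy_comm _ K X). }
  by rewrite H TU.
Qed.

Lemma conv_mono {X Y : ob C} (c c' : hom X Y) : c ≤ c' -> conv c ≤ conv c'.
Proof.
  move=> H. rewrite /conv.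
  have R := le_refl _ L.
  repeat apply: (comp_mono _ L); try apply: R.
  apply: (tens_mono _ L); last exact: R.
  apply: (tens_mono _ L); [exact: R | exact: H].
Qed.
End Coh.

Section Bool.
Variable S : Sig.
Hypothesis L : SMPosLaws S.
Hypothesis B : BoolLaws S.

Lemma compl_unique {X Y : ob S} (a b : hom X Y) :
  bmeet a b ≤ bbot X Y -> btop X Y ≤ bjoin a b -> b = bneg a.
Proof.
  move=> Hm Hj.
  have R := le_refl _ L. have Tr := le_trans _ L.
  have Gl := meet_glb _ B. have Lu := join_lub _ B.
  apply: (le_antisym _ L).
  - apply: (Tr _ _ _ (bmeet b (bjoin a (bneg a)))).
    + apply/Gl; split; first exact: R. rewrite (neg_join _ B). exact: top_max.
    + rewrite (distrib _ B). apply/Lu; split.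
      * apply: (Tr _ _ _ (bmeet a b)).
        -- apply/Gl. have [H1 H2] := proj1 (Gl _ _ _ _ _) (R _ _ (bmeet b a)). by split.
        -- apply: Tr Hm _. exact: bot_min.
      * have [H1 H2] := proj1 (Gl _ _ _ _ _) (R _ _ (bmeet b (bneg a))). exact: H2.
  - apply: (Tr _ _ _ (bmeet (bneg a) (bjoin a b))).
    + apply/Gl; split; first exact: R. apply: Tr Hj. exact: top_max.
    + rewrite (distrib _ B). apply/Lu; split.
      * apply: (Tr _ _ _ (bmeet a (bneg a))).
        -- apply/Gl. have [H1 H2] := proj1 (Gl _ _ _ _ _) (R _ _ (bmeet (bneg a) a)). by split.
        -- rewrite (neg_meet _ B). exact: bot_min.
      * have [H1 H2] := proj1 (Gl _ _ _ _ _) (R _ _ (bmeet (bneg a) b)). exact: H2.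
Qed.
End Bool.

Theorem lemma56 (C : PeirceanBicategory) (X Y : ob C) (c : hom X Y) :
  conv (bneg c) = bneg (conv c).
Proof.
  have L := cb_smc C. have B := pb_bool C.
  have R := le_refl _ L. have Tr := le_trans _ L.
  have Gl := meet_glb _ B. have Lu := join_lub _ B.
  have inv := @conv_inv C. have mono := @conv_mono C.
  apply: (compl_unique _ L B).
  - set m := bmeet (conv c) (conv (bneg c)).
    have [H1 H2] := proj1 (Gl _ _ _ _ _) (R _ _ m).
    have Hm : conv m ≤ bbot X Y.
    { rewrite -(neg_meet _ B _ _ c). apply/Gl; split.
      - rewrite -(inv _ _ c). exact: mono.
      - rewrite -(inv _ _ (bneg c)). exact: mono. }
    rewrite -(inv _ _ m). apply: Tr (mono _ _ _ _ Hm) _.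
    rewrite -(inv _ _ (bbot Y X)). apply: mono. exact: bot_min.
  - set j := bjoin (conv c) (conv (bneg c)).
    have [H1 H2] := proj1 (Lu _ _ _ _ _) (R _ _ j).
    have Hj : btop X Y ≤ conv j.
    { rewrite -(neg_join _ B _ _ c). apply/Lu; split.
      - rewrite -{1}(inv _ _ c). exact: mono.
      - rewrite -{1}(inv _ _ (bneg c)). exact: mono. }
    rewrite -(inv _ _ j). apply: Tr _ (mono _ _ _ _ Hj).
    rewrite -{1}(inv _ _ (btop Y X)). apply: mono. exact: top_max.
Qed.
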